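(* Let $\psi,\phi\in \mathbf{\Psi}_n$ and $m:=\min_{t\in\Omega_n}\frac{\psi(t)}{\phi(t)}$, $M:=\max_{t\in\Omega_n}\frac{\psi(t)}{\phi(t)}$. Then: (i) $\frac{m^2}{M^2}\cdot C_{\rm NJ}(|\!|\!|\cdot|\!|\!|_\phi) \le C_{\rm NJ}(|\!|\!|\cdot|\!|\!|_\psi)\le \frac{M^2}{m^2}\cdot C_{\rm NJ}(|\!|\!|\cdot|\!|\!|_\phi)$; (ii) $\frac{m^2}{M^2}\cdot C_{\rm NJ}(|\!|\!|\cdot|\!|\!|_{\phi^*}) \le C_{\rm NJ}(|\!|\!|\cdot|\!|\!|_{\psi^*})\le\frac{M^2}{m^2}\cdot C_{\rm NJ}(|\!|\!|\cdot|\!|\!|_{\phi^*})$.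
   Context: Let $(X,\|\cdot\|)$ be a normed vector space, $n\ge2$. $\Omega_n:=\{t\in\mathbb{R}^n\mid t_i\ge0,\ \sum_i t_i=1\}$, $\Omega_n^\circ:=\{t\in\Omega_n\mid t_i<1\ \forall i\}$. $\mathbf{\Psi}_n$ is the class of convex continuous $\psi:\Omega_n\to\mathbb{R}$ with (B1) $\psi(\mathbf{e}_i)=1$ for all standard unit vectors $\mathbf{e}_i$ and (B2) $\psi(t)\ge(1-t_i)\psi\big(\frac{t_1}{1-t_i},\ldots,\frac{t_{i-1}}{1-t_i},0,\frac{t_{i+1}}{1-t_i},\ldots,\frac{t_n}{1-t_i}\big)$ for all $t\in\Omega_n^\circ$, $i=1,\ldots,n$. For $\psi\in\mathbf{\Psi}_n$, $|\!|\!|x|\!|\!|_\psi:=\big(\sum_{i}\|x_i\|\big)\,\psi\big(\frac{\|x_1\|}{\sum_{i}\|x_i\|},\ldots,\frac{\|x_n\|}{\sum_{i}\|x_i\|}\big)$ for $0\ne x\in X^n$, $|\!|\!|0|\!|\!|_\psi:=0$; $\psi^*(s):=\max_{t\in\Omega_n}\frac{\langle t,s\rangle}{\psi(t)}$ and $|\!|\!|\cdot|\!|\!|_{\psi^*}$ is the dual norm of $|\!|\!|\cdot|\!|\!|_\psi$ on $(X^n)^*$. For a norm $N$ on a vector space $Y$, the von Neumann–Jordan constant is $C_{\rm NJ}(N):=\sup\Big\{\frac{N(x+y)^2+N(x-y)^2}{2(N(x)^2+N(y)^2)}\ \Big|\ x,y\in Y,\ N(x)+N(y)>0\Big\}$.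 *)

(* Defs.v *)
From HB Require Import structures.
From mathcomp Require Import all_boot all_order all_algebra.
From mathcomp Require Import all_classical all_reals all_analysis.
Set Implicit Arguments. Unset Strict Implicit. Unset Printing Implicit Defensive.
Import Order.TTheory GRing.Theory Num.Theory.
Import numFieldNormedType.Exports.
Local Open Scope classical_set_scope.
Local Open Scope ring_scope.

Section Defs.
Variable R : realType.

Definition Omega (n : nat) : set 'rV[R]_n :=
  [set t | (forall i, 0 <= t ord0 i) /\ \sum_i t ord0 i = 1].

Definition Omega_int (n : nat) : set 'rV[R]_n :=
  [set t | Omega t /\ forall i, t ord0 i < 1].

Definition Psi_class (n : nat) (psi : 'rV[R]_n -> R) : Prop :=
  (forall s t (l : R), Omega s -> Omega t -> 0 <= l -> l <= 1 ->
     psi (l *: s + (1 - l) *: t) <= l * psi s + (1 - l) * psi t) /\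
  {within @Omega n, continuous psi} /\
  (forall i : 'I_n, psi (\row_j (if j == i then 1 else 0)) = 1) /\
  (forall t, Omega_int t -> forall i : 'I_n,
     psi t >= (1 - t ord0 i) *
       psi (\row_j (if j == i then 0 else t ord0 j / (1 - t ord0 i)))).

Definition psi_norm (X : normedModType R) (n : nat) (psi : 'rV[R]_n -> R)
  (x : 'I_n -> X) : R :=
  let s := \sum_i `|x i| in
  if s == 0 then 0 else s * psi (\row_i (`|x i| / s)).

(* (X^n)^* : bounded (= continuous) linear functionals on X^n, where X^n
   carries its usual product topology, i.e. the one of the l1-sum norm
   (all psi-norms are equivalent to it) *)
Definition dual_space (X : normedModType R) (n : nat) :
  set (('I_n -> X) -> R) :=
  [set f | (forall (a : R) (x y : 'I_n -> X),
              f (fun i => a *: x i + y i) = a * f x + f y) /\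
           exists C : R, forall x, `|f x| <= C * \sum_i `|x i|].

Definition dual_psi_norm (X : normedModType R) (n : nat)
  (psi : 'rV[R]_n -> R) (f : ('I_n -> X) -> R) : R :=
  sup [set `|f x| | x in [set x | psi_norm psi x <= 1]].

Definition CNJ (Y : Type) (D : set Y) (add sub : Y -> Y -> Y) (N : Y -> R)
  : \bar R :=
  ereal_sup [set ((N (add xy.1 xy.2) ^+ 2 + N (sub xy.1 xy.2) ^+ 2)
                   / (2 * (N xy.1 ^+ 2 + N xy.2 ^+ 2)))%:E
            | xy in [set xy : Y * Y | D xy.1 /\ D xy.2 /\ 0 < N xy.1 + N xy.2]].

End Defs.

(* Main.v *)
Require Import Defs.
From HB Require Import structures.
From mathcomp Require Import all_boot all_order all_algebra.
From mathcomp Require Import all_classical all_reals all_analysis.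
From mathcomp Require Import ring lra.
Import Order.TTheory GRing.Theory Num.Theory.
Import numFieldNormedType.Exports.
Local Open Scope classical_set_scope.
Local Open Scope ring_scope.
Set Implicit Arguments. Unset Strict Implicit.

Lemma ratio_le (R : realType) (a b p1 q1 u1 w1 p2 q2 u2 w2 : R) :
  0 < a -> 0 < b ->
  0 <= p2 -> a * p2 <= p1 -> p1 <= b * p2 ->
  0 <= q2 -> a * q2 <= q1 -> q1 <= b * q2 ->
  0 <= u2 -> a * u2 <= u1 -> u1 <= b * u2 ->
  0 <= w2 -> a * w2 <= w1 -> w1 <= b * w2 ->
  0 < u1 + w1 ->
  0 < u2 + w2 /\
  (p1 ^+ 2 + q1 ^+ 2) / (2 * (u1 ^+ 2 + w1 ^+ 2)) <=
  b ^+ 2 / a ^+ 2 * ((p2 ^+ 2 + q2 ^+ 2) / (2 * (u2 ^+ 2 + w2 ^+ 2))).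
Proof.
move=> a0 b0 p20 p1l p1u q20 q1l q1u u20 u1l u1u w20 w1l w1u s1.
have s2 : 0 < u2 + w2.
  have h : u1 + w1 <= b * (u2 + w2) by rewrite mulrDr; exact: lerD.
  have := lt_le_trans s1 h; rewrite pmulr_rgt0 //.
split => //.
have d2 : 0 < u2 ^+ 2 + w2 ^+ 2.
  have e1 : 0 < (u2 + w2) ^+ 2 by rewrite exprn_gt0.
  have e2 : 0 <= (u2 - w2) ^+ 2 by rewrite sqr_ge0.
  nra.
have d1 : a ^+ 2 * (u2 ^+ 2 + w2 ^+ 2) <= u1 ^+ 2 + w1 ^+ 2.
  have : (a * u2) ^+ 2 <= u1 ^+ 2 by rewrite ler_sqr ?nnegrE; nra.
  have : (a * w2) ^+ 2 <= w1 ^+ 2 by rewrite ler_sqr ?nnegrE; nra.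
  rewrite !exprMn; nra.
have n1 : p1 ^+ 2 + q1 ^+ 2 <= b ^+ 2 * (p2 ^+ 2 + q2 ^+ 2).
  have : p1 ^+ 2 <= (b * p2) ^+ 2 by rewrite ler_sqr ?nnegrE; nra.
  have : q1 ^+ 2 <= (b * q2) ^+ 2 by rewrite ler_sqr ?nnegrE; nra.
  rewrite !exprMn; nra.
have a2 : 0 < a ^+ 2 by rewrite exprn_gt0.
have d1p : 0 < u1 ^+ 2 + w1 ^+ 2 by apply: lt_le_trans d1; rewrite mulr_gt0.
apply: (@le_trans _ _ ((b ^+ 2 * (p2 ^+ 2 + q2 ^+ 2)) / (2 * (a ^+ 2 * (u2 ^+ 2 + w2 ^+ 2))))).
  apply: ler_pM => //.
  - by rewrite addr_ge0 // sqr_ge0.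
  - by rewrite invr_ge0 mulr_ge0 // ltW.
  - rewrite lef_pV2 ?posrE ?mulr_gt0 //.
    by rewrite ler_pM2l.
rewrite le_eqVlt; apply/orP; left; apply/eqP; field.
by apply/andP; split; rewrite gt_eqF.
Qed.

Lemma CNJ_le (R : realType) (Y : Type) (D : set Y) (add sub : Y -> Y -> Y)
  (N1 N2 : Y -> R) (P : Y -> Prop) (a b : R) :
  0 < a -> 0 < b ->
  (forall y, P y -> 0 <= N2 y /\ a * N2 y <= N1 y /\ N1 y <= b * N2 y) ->
  (forall x y, D x -> D y -> P x /\ P y /\ P (add x y) /\ P (sub x y)) ->
  (CNJ D add sub N1 <= (b ^+ 2 / a ^+ 2)%:E * CNJ D add sub N2)%E.
Proof.
move=> a0 b0 HN HD.
apply: ge_ereal_sup => _ [[x y] /= [Dx [Dy s1]] <-].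
have [Px [Py [Pa Ps]]] := HD x y Dx Dy.
have [p20 [p1l p1u]] := HN _ Pa.
have [q20 [q1l q1u]] := HN _ Ps.
have [u20 [u1l u1u]] := HN _ Px.
have [w20 [w1l w1u]] := HN _ Py.
have [s2 H] := ratio_le a0 b0 p20 p1l p1u q20 q1l q1u u20 u1l u1u w20 w1l w1u s1.
apply: (le_trans (y := ((b ^+ 2 / a ^+ 2 * _)%:E))); first by rewrite lee_fin; exact: H.
rewrite EFinM; apply: lee_wpmul2l.
  by rewrite lee_fin divr_ge0 // exprn_ge0 // ltW.
by apply: ereal_sup_ubound; exists (x, y).
Qed.
Section Pos.
Variables (R : realType) (n : nat).

Lemma sum_split (t : 'rV[R]_n) l :
  \sum_i t ord0 i = t ord0 l + \sum_(i | i != l) t ord0 i.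
Proof. by rewrite (bigD1 l). Qed.

Lemma Omega_le1 (t : 'rV[R]_n) l : Omega t -> t ord0 l <= 1.
Proof.
move=> [t0 t1]; rewrite -t1 (sum_split t l) lerDl.
by apply: sumr_ge0 => i _.
Qed.

Lemma Omega_e (t : 'rV[R]_n) l : Omega t -> t ord0 l = 1 ->
  t = \row_j (if j == l then 1 else 0).
Proof.
move=> [t0 t1] tl; apply/rowP => j; rewrite !mxE.
have [->|jl] := eqVneq j l; first by [].
have : \sum_(i | i != l) t ord0 i = 0.
  by move: t1; rewrite (sum_split t l) tl => /(congr1 (fun z => z - 1)); rewrite subrr addrC addKr.
move/psumr_eq0P => /(_ (fun i _ => t0 i)) /(_ j jl).
by [].
Qed.

Lemma psi_ge (psi : 'rV[R]_n -> R) : Psi_class psi ->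
  forall k (t : 'rV[R]_n), Omega t -> (#|[set i | t ord0 i != 0%R]%SET| <= k)%N ->
  forall j, t ord0 j <= psi t.
Proof.
move=> [_ [_ [B1 B2]]] k; elim: k => [|k IH] t Ot.
  rewrite leqn0 => H0; have E : [set i | t ord0 i != 0%R]%SET = finset.set0 by apply/eqP; rewrite -cards_eq0. exfalso.
  have : \sum_i t ord0 i = 0.
    apply: big1 => i _; apply/eqP/negPn/negP => hi.
    have : i \in [set i | t ord0 i != 0%R]%SET by rewrite inE.
    by rewrite E inE.
  by case: Ot => _ ->; apply/eqP; rewrite oner_eq0.
move=> Hk j.
have [[l tl]|nl] := pselect (exists l, t ord0 l = 1).
  by rewrite (Omega_e Ot tl) B1 -(Omega_e Ot tl); exact: Omega_le1.
have tlt : forall l, t ord0 l < 1.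
  by move=> l; rewrite lt_neqAle Omega_le1 // andbT; apply/eqP => h; apply: nl; exists l.
have Oi : Omega_int t by split.
have [i [ij ti]] : exists i, i != j /\ 0 < t ord0 i.
  apply/not_existsP => H; move: (tlt j); rewrite ltNge => /negP; apply.
  case: Ot => t0 t1; rewrite -t1 (sum_split t j) big1 ?addr0 // => i ij.
  apply/eqP; rewrite eq_le t0 andbT leNgt; apply/negP => hi.
  by apply: (H i); split.
have ti1 : 0 < 1 - t ord0 i by rewrite subr_gt0.
set t' := \row_l (if l == i then 0 else t ord0 l / (1 - t ord0 i)).
have Ot' : Omega t'.
  case: Ot => t0 t1; split.
    by move=> l; rewrite mxE; case: ifP => // _; rewrite divr_ge0 // ltW.
  rewrite (sum_split t' i) mxE eqxx add0r.
  rewrite (eq_bigr (fun l => t ord0 l / (1 - t ord0 i))); last first.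
    by move=> l /negbTE li; rewrite mxE li.
  rewrite -mulr_suml.
  have -> : \sum_(l | l != i) t ord0 l = 1 - t ord0 i.
    by rewrite -t1 (sum_split t i) addrAC subrr add0r.
  by rewrite divff // gt_eqF.
have Ht' : (#|[set l | t' ord0 l != 0%R]%SET| <= k)%N.
  have sub : [set l | t' ord0 l != 0%R]%SET \subset [set l | t ord0 l != 0%R]%SET :\ i.
    apply/fintype.subsetP => l; rewrite !inE mxE; case: ifP => [|_]; first by rewrite eqxx.
    by rewrite mulf_eq0 negb_or => /andP[-> _].
  apply: leq_trans (subset_leq_card sub) _.
  have iin : i \in [set l | t ord0 l != 0%R]%SET by rewrite inE gt_eqF.
  move: Hk; rewrite (cardsD1 i [set l | t ord0 l != 0%R]%SET) iin add1n ltnS.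
  by [].
have := IH t' Ot' Ht' j; rewrite mxE eq_sym (negbTE ij) => h.
apply: le_trans (B2 t Oi i).
rewrite -ler_pdivrMl //.
by rewrite mulrC.
Qed.


Lemma psi_pos (psi : 'rV[R]_n -> R) t : Psi_class psi -> Omega t -> 0 < psi t.
Proof.
move=> Hp Ot.
have [j tj] : exists j, 0 < t ord0 j.
  apply/not_existsP => H; case: Ot => t0 t1.
  have : \sum_i t ord0 i <= 0.
    apply: sumr_le0 => i _; rewrite leNgt; apply/negP => hi; exact: (H i).
  by rewrite t1 ler10.
apply: lt_le_trans tj _.
exact: (@psi_ge psi Hp _ t Ot (leqnn _)).
Qed.

Variable X : normedModType R.

Lemma row_Omega (x : 'I_n -> X) : \sum_i `|x i| != 0 ->
  Omega (\row_i (`|x i| / \sum_i `|x i|)).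
Proof.
move=> s0; have sp : 0 < \sum_i `|x i|.
  by rewrite lt_neqAle eq_sym s0 sumr_ge0.
split; first by move=> i; rewrite mxE divr_ge0 // ltW.
rewrite (eq_bigr (fun i => `|x i| / \sum_i `|x i|)); last by move=> i _; rewrite mxE.
by rewrite -mulr_suml divff.
Qed.

Lemma psi_norm_ge0 (nu : 'rV[R]_n -> R) (x : 'I_n -> X) : Psi_class nu -> 0 <= psi_norm nu x.
Proof.
move=> Hn; rewrite /psi_norm; case: ifPn => // s0.
rewrite mulr_ge0 ?sumr_ge0 // ltW // psi_pos //; exact: row_Omega.
Qed.

Lemma psi_norm_lb (psi phi : 'rV[R]_n -> R) c (x : 'I_n -> X) : Psi_class psi -> Psi_class phi ->
  (forall t, Omega t -> c <= psi t / phi t) -> c * psi_norm phi x <= psi_norm psi x.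
Proof.
move=> Hs Hf Hc; rewrite /psi_norm; case: ifPn => [_|s0]; first by rewrite mulr0.
have O := row_Omega s0; have fp := psi_pos Hf O.
rewrite mulrCA ler_wpM2l ?sumr_ge0 //.
by rewrite -ler_pdivlMr // Hc.
Qed.

Lemma psi_norm_ub (psi phi : 'rV[R]_n -> R) c (x : 'I_n -> X) : Psi_class psi -> Psi_class phi ->
  (forall t, Omega t -> psi t / phi t <= c) -> psi_norm psi x <= c * psi_norm phi x.
Proof.
move=> Hs Hf Hc; rewrite /psi_norm; case: ifPn => [_|s0]; first by rewrite mulr0.
have O := row_Omega s0; have fp := psi_pos Hf O.
rewrite mulrCA ler_wpM2l ?sumr_ge0 //.
by rewrite -ler_pdivrMr // Hc.
Qed.

Lemma psi_norm_hom (nu : 'rV[R]_n -> R) c (x : 'I_n -> X) : 0 < c ->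
  psi_norm nu (fun i => c *: x i) = c * psi_norm nu x.
Proof.
move=> c0; rewrite /psi_norm.
have E : \sum_i `|c *: x i| = c * \sum_i `|x i|.
  rewrite mulr_sumr; apply: eq_bigr => i _; by rewrite normrZ gtr0_norm.
rewrite E mulf_eq0 (gt_eqF c0) /=; case: ifPn => // s0; first by rewrite mulr0.
rewrite -mulrA; congr (_ * (_ * nu _)); apply/rowP => i; rewrite !mxE.
rewrite normrZ gtr0_norm // invfM mulrACA divff ?gt_eqF // mul1r //.
Qed.

Lemma psi_norm0 (nu : 'rV[R]_n -> R) : psi_norm nu (fun _ : 'I_n => (0 : X)) = 0.
Proof.
by rewrite /psi_norm big1 ?eqxx // => i _; rewrite normr0.
Qed.

Definition linf (f : ('I_n -> X) -> R) := forall (a : R) (x y : 'I_n -> X),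
  f (fun i => a *: x i + y i) = a * f x + f y.

Lemma linf_hom f c x : linf f -> f (fun i => c *: x i) = c * f x.
Proof.
move=> Hf.
have f0 : f (fun _ => 0) = 0.
  have := Hf 1 (fun _ => 0) (fun _ => 0).
  rewrite (_ : (fun i : 'I_n => 1 *: (0 : X) + 0) = fun _ => 0); last first.
    by apply: funext => i; rewrite scaler0 addr0.
  by rewrite mul1r => /eqP; rewrite -subr_eq subrr eq_sym => /eqP.
have := Hf c x (fun _ => 0); rewrite f0 addr0 => <-.
by congr f; apply: funext => i; rewrite addr0.
Qed.

Lemma dual_ge0 nu (f : ('I_n -> X) -> R) : 0 <= dual_psi_norm nu f.
Proof.
rewrite /dual_psi_norm.
have [hs|hs] := pselect (has_sup [set `|f x| | x in [set x | psi_norm nu x <= 1]]).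
  apply: le_trans (sup_upper_bound hs _); first exact: (normr_ge0 (f (fun _ => 0))).
  by exists (fun _ => 0) => //=; rewrite psi_norm0 ler01.
by rewrite sup_out.
Qed.

Lemma dual_cmp (nu1 nu2 : 'rV[R]_n -> R) (a b : R) (f : ('I_n -> X) -> R) : 0 < a -> 0 < b ->
  (forall x : 'I_n -> X, a * psi_norm nu2 x <= psi_norm nu1 x) ->
  (forall x : 'I_n -> X, psi_norm nu1 x <= b * psi_norm nu2 x) -> linf f ->
  dual_psi_norm nu1 f <= a^-1 * dual_psi_norm nu2 f.
Proof.
move=> a0 b0 Ha Hb Hf; rewrite /dual_psi_norm.
set S1 := [set `|f x| | x in [set x | psi_norm nu1 x <= 1]].
set S2 := [set `|f x| | x in [set x | psi_norm nu2 x <= 1]].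
have n1 : S1 !=set0 by exists `|f (fun _ => 0)|, (fun _ => 0) => //=; rewrite psi_norm0 ler01.
have n2 : S2 !=set0 by exists `|f (fun _ => 0)|, (fun _ => 0) => //=; rewrite psi_norm0 ler01.
have [hb|hb] := pselect (has_ubound S2).
  apply: ge_sup => // _ [x /= Nx <-].
  have Sy : S2 `|f (fun i => a *: x i)|.
    exists (fun i => a *: x i) => //=; rewrite psi_norm_hom //.
    exact: le_trans (Ha x) Nx.
  have := sup_upper_bound (conj n2 hb) Sy.
  rewrite linf_hom // normrM gtr0_norm // => h.
  by rewrite ler_pdivlMl.
have nb1 : ~ has_ubound S1.
  move=> [B HB]; apply: hb; exists (b * B) => _ [y /= Ny <-].
  have Sx : S1 `|f (fun i => b^-1 *: y i)|.
    exists (fun i => b^-1 *: y i) => //=; rewrite psi_norm_hom ?invr_gt0 //.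
    rewrite ler_pdivrMl // mulr1; apply: le_trans (Hb y) _.
  by rewrite -[X in _ <= X]mulr1 ler_pM2l.
  have := HB _ Sx; rewrite linf_hom // normrM gtr0_norm ?invr_gt0 //.
  by rewrite ler_pdivrMl.
rewrite (sup_out (fun h => nb1 h.2)) (sup_out (fun h => hb h.2)) mulr0 //.
Qed.

End Pos.

Lemma ebound (R : realType) (k : R) (A B : \bar R) : 0 < k ->
  (A <= k^-1%:E * B)%E -> (k%:E * A <= B)%E.
Proof.
move=> k0 h; have := lee_wpmul2l (x := k%:E) _ h.
rewrite lee_fin (ltW k0) muleA -EFinM divff ?gt_eqF // mul1e; exact.
Qed.

Theorem theorem6p2 (R : realType) (X : normedModType R) (n : nat)
  (psi phi : 'rV[R]_n -> R) (m M : R) :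
  (2 <= n)%N ->
  Psi_class psi -> Psi_class phi ->
  (* m = min_{t in Omega_n} psi t / phi t *)
  (exists2 t0, Omega t0 & m = psi t0 / phi t0) ->
  (forall t, Omega t -> m <= psi t / phi t) ->
  (* M = max_{t in Omega_n} psi t / phi t *)
  (exists2 t1, Omega t1 & M = psi t1 / phi t1) ->
  (forall t, Omega t -> psi t / phi t <= M) ->
  let CNJ_primal (nu : 'rV[R]_n -> R) :=
    CNJ setT (fun x y : 'I_n -> X => fun i => x i + y i)
             (fun x y : 'I_n -> X => fun i => x i - y i) (psi_norm nu) in
  let CNJ_dual (nu : 'rV[R]_n -> R) :=
    CNJ (@dual_space R X n)
        (fun f g : ('I_n -> X) -> R => fun x => f x + g x)
        (fun f g : ('I_n -> X) -> R => fun x => f x - g x)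
        (dual_psi_norm nu) in
  (* (i) *)
  (((m ^+ 2 / M ^+ 2)%:E * CNJ_primal phi <= CNJ_primal psi)%E /\
   (CNJ_primal psi <= (M ^+ 2 / m ^+ 2)%:E * CNJ_primal phi)%E) /\
  (* (ii) *)
  (((m ^+ 2 / M ^+ 2)%:E * CNJ_dual phi <= CNJ_dual psi)%E /\
   (CNJ_dual psi <= (M ^+ 2 / m ^+ 2)%:E * CNJ_dual phi)%E).
Proof.
move=> _ Hs Hf [t0 Ot0 em] Hm [t1 Ot1 eM] HM CP CD.
have m0 : 0 < m by rewrite em divr_gt0 // psi_pos.
have M0 : 0 < M by rewrite eM divr_gt0 // psi_pos.
have mi0 : 0 < m^-1 by rewrite invr_gt0.
have Mi0 : 0 < M^-1 by rewrite invr_gt0.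
have lbP : forall x : 'I_n -> X, m * psi_norm phi x <= psi_norm psi x.
  by move=> x; apply: psi_norm_lb.
have ubP : forall x : 'I_n -> X, psi_norm psi x <= M * psi_norm phi x.
  by move=> x; apply: psi_norm_ub.
have lbP' : forall x : 'I_n -> X, M^-1 * psi_norm psi x <= psi_norm phi x.
  by move=> x; rewrite mulrC ler_pdivrMr // mulrC.
have ubP' : forall x : 'I_n -> X, psi_norm phi x <= m^-1 * psi_norm psi x.
  by move=> x; rewrite mulrC ler_pdivlMr // mulrC.
have E1 : (m^-1) ^+ 2 / (M^-1) ^+ 2 = (m ^+ 2 / M ^+ 2)^-1.
  by rewrite !exprVn invf_div invrK mulrC.
have E2 : (m^-1) ^+ 2 / (M^-1) ^+ 2 = M ^+ 2 / m ^+ 2.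
  by rewrite E1 invf_div.
have k0 : 0 < m ^+ 2 / M ^+ 2 by rewrite divr_gt0 // exprn_gt0.
have lin : forall f : ('I_n -> X) -> R, @dual_space R X n f -> linf f by move=> f [].
have HD : forall f g : ('I_n -> X) -> R, @dual_space R X n f -> @dual_space R X n g ->
    linf f /\ linf g /\ linf (fun x => f x + g x) /\ linf (fun x => f x - g x).
  move=> f g /lin Lf /lin Lg; do !split => //.
    by move=> a x y; rewrite Lf Lg mulrDr addrACA.
  by move=> a x y; rewrite Lf Lg mulrBr opprD addrACA.
have dub : forall f : ('I_n -> X) -> R, linf f -> dual_psi_norm psi f <= m^-1 * dual_psi_norm phi f.
  by move=> f Lf; apply: (dual_cmp (b := M)).
have dlb : forall f : ('I_n -> X) -> R, linf f -> dual_psi_norm phi f <= M * dual_psi_norm psi f.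
  by move=> f Lf; rewrite -[M]invrK; apply: (dual_cmp (b := m^-1)).
split; split.
- apply: ebound => //; rewrite -E1.
  apply: (CNJ_le (P := setT)) => // y _; split; first exact: psi_norm_ge0.
  by split.
- apply: (CNJ_le (P := setT)) => // y _; split; first exact: psi_norm_ge0.
  by split.
- apply: ebound => //; rewrite invf_div.
  apply: (CNJ_le (P := @linf R n X)) => // f Lf; split; first exact: dual_ge0.
  split; last exact: dlb.
  by rewrite mulrC -ler_pdivlMr // mulrC dub.
- rewrite -E2.
  apply: (CNJ_le (P := @linf R n X)) => // f Lf; split; first exact: dual_ge0.
  split; last exact: dub.
  by rewrite mulrC ler_pdivrMr // mulrC dlb.
Qed.
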